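(* Let $0<R\le\infty$ and let $\varphi$ be a quasiconcave function on $[0,R)$. Then: (i) $S_\varphi$ is bounded from $M_\varphi(0,R)$ to $M_\varphi(0,R)$ if and only if $\varphi$ satisfies the $B$-condition; (ii) $S_\varphi$ is bounded from $L^\infty(0,R)$ to $L^\infty(0,R)$ for every quasiconcave $\varphi$.
   Context: For a measurable a.e. finite function $f$ on $(0,R)$, $f^*$ is its non-increasing rearrangement, $f^*(t)=\inf\{\lambda>0: |\{x:|f(x)|>\lambda\}|\le t\}$, and $f^{**}(t)=\frac1t\int_0^t f^*(s)\,ds$. A function $\varphi\colon[0,R)\to[0,\infty)$ is quasiconcave if $\varphi(t)=0$ iff $t=0$, $\varphi$ is non-decreasing, and $\varphi(t)/t$ is non-increasing on $(0,R)$. It satisfies the $B$-condition if there is $C>0$ with $\frac1t\int_0^t \frac{ds}{\varphi(s)}\le \frac{C}{\varphi(t)}$ for all $t\in(0,R)$. $S_\varphi f(t)=\frac{1}{\varphi(t)}\sup_{0<s<t}\varphi(s)f^*(s)$, $t\in(0,R)$. $M_\varphi(0,R)$ is the set of $f$ with $\|f\|_{M_\varphi}=\sup_{0<s<R}\varphi(s)f^{**}(s)<\infty$. *)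

(* Defs.v *)
From HB Require Import structures.
From mathcomp Require Import all_boot all_order all_algebra.
From mathcomp Require Import all_classical all_reals all_analysis.
From mathcomp Require Import measurable_realfun ess_sup_inf.
Set Implicit Arguments. Unset Strict Implicit. Unset Printing Implicit Defensive.
Import Order.TTheory GRing.Theory Num.Theory.
Import numFieldNormedType.Exports.
Local Open Scope classical_set_scope.
Local Open Scope ring_scope.

Definition Ioo0 {R : realType} (Rb : \bar R) : set R :=
  [set x | 0 < x /\ (x%:E < Rb)%E].

Definition distrib {R : realType} (Rb : \bar R) (f : R -> \bar R) (lam : R) : \bar R :=
  (@lebesgue_measure R) (Ioo0 Rb `&` [set x | (lam%:E < `|f x|)%E]).

Definition rearr {R : realType} (Rb : \bar R) (f : R -> \bar R) (t : R) : \bar R :=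
  ereal_inf [set lam%:E | lam in [set lam : R | 0 < lam /\ (distrib Rb f lam <= t%:E)%E]].

Definition rearr2 {R : realType} (Rb : \bar R) (f : R -> \bar R) (t : R) : \bar R :=
  ((t^-1)%:E * \int[@lebesgue_measure R]_(s in (`]0%R, t[ : set R)) rearr Rb f s)%E.

Definition ae_finite {R : realType} (Rb : \bar R) (f : R -> \bar R) : Prop :=
  {ae @lebesgue_measure R, forall x, Ioo0 Rb x -> f x \is a fin_num}.

Definition quasiconcave {R : realType} (Rb : \bar R) (phi : R -> R) : Prop :=
  [/\ (forall t, 0 <= t -> (t%:E < Rb)%E -> 0 <= phi t),
      (forall t, 0 <= t -> (t%:E < Rb)%E -> (phi t = 0 <-> t = 0)),
      (forall s t, 0 <= s -> s <= t -> (t%:E < Rb)%E -> phi s <= phi t) &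
      (forall s t, 0 < s -> s <= t -> (t%:E < Rb)%E -> phi t / t <= phi s / s)].

Definition B_condition {R : realType} (Rb : \bar R) (phi : R -> R) : Prop :=
  exists C : R, 0 < C /\
    forall t, Ioo0 Rb t ->
      ((t^-1)%:E * \int[@lebesgue_measure R]_(s in (`]0%R, t[ : set R)) ((phi s)^-1)%:E
        <= (C / phi t)%:E)%E.

Definition S_op {R : realType} (Rb : \bar R) (phi : R -> R) (f : R -> \bar R)
  (t : R) : \bar R :=
  (((phi t)^-1)%:E *
     ereal_sup [set ((phi s)%:E * rearr Rb f s)%E | s in (`]0%R, t[ : set R)])%E.

Definition M_norm {R : realType} (Rb : \bar R) (phi : R -> R) (f : R -> \bar R) : \bar R :=
  ereal_sup [set ((phi s)%:E * rearr2 Rb f s)%E | s in Ioo0 Rb].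

Definition in_M {R : realType} (Rb : \bar R) (phi : R -> R) (f : R -> \bar R) : Prop :=
  [/\ measurable_fun (Ioo0 Rb) f, ae_finite Rb f & (M_norm Rb phi f < +oo)%E].

Definition Linf_norm {R : realType} (Rb : \bar R) (f : R -> \bar R) : \bar R :=
  ess_sup (@lebesgue_measure R)
    (fun x => if x \in Ioo0 Rb then `|f x|%E else 0%E).

Definition in_Linf {R : realType} (Rb : \bar R) (f : R -> \bar R) : Prop :=
  measurable_fun (Ioo0 Rb) f /\ (Linf_norm Rb f < +oo)%E.

Definition bounded_op {R : realType} (X : (R -> \bar R) -> Prop)
  (N : (R -> \bar R) -> \bar R) (T : (R -> \bar R) -> (R -> \bar R)) : Prop :=
  exists C : R, forall f, X f -> X (T f) /\ (N (T f) <= C%:E * N f)%E.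

(* Main.v *)
Require Import Defs.
From HB Require Import structures.
From mathcomp Require Import all_boot all_order all_algebra.
From mathcomp Require Import all_classical all_reals all_analysis.
From mathcomp Require Import measurable_realfun ess_sup_inf.
From mathcomp Require Import ring.
Set Implicit Arguments. Unset Strict Implicit. Unset Printing Implicit Defensive.
Import Order.TTheory GRing.Theory Num.Theory.
Import numFieldNormedType.Exports.
Local Open Scope classical_set_scope.
Local Open Scope ring_scope.

Section Aux.
Variable R : realType.

Lemma emono_measurable (D : set R) (f : R -> \bar R) : is_interval D ->
  (forall x y, D x -> D y -> x <= y -> (f x <= f y)%E) -> measurable_fun D f.
Proof.
move=> iD fnd; have mD : measurable D by exact: is_interval_measurable.
apply: (measurability _ (ErealGenOInfty.measurableE R)) => //.
move=> /= _ [_ [r ->] <-]; apply: is_interval_measurable.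
move=> s t [Ds /= fs] [Dt /= ft] u /andP[su ut]; split.
  by apply: (iD s t) => //; rewrite su ut.
have Du : D u by apply: (iD s t) => //; rewrite su ut.
move: fs; rewrite /= !in_itv /= andbT => fs.
by rewrite andbT (lt_le_trans fs) // fnd.
Qed.

Lemma eanti_measurable (D : set R) (f : R -> \bar R) : is_interval D ->
  (forall x y, D x -> D y -> x <= y -> (f y <= f x)%E) -> measurable_fun D f.
Proof.
move=> iD fni; have mD : measurable D by exact: is_interval_measurable.
apply: (measurability _ (ErealGenOInfty.measurableE R)) => //.
move=> /= _ [_ [r ->] <-]; apply: is_interval_measurable.
move=> s t [Ds /= fs] [Dt /= ft] u /andP[su ut]; split.
  by apply: (iD s t) => //; rewrite su ut.
have Du : D u by apply: (iD s t) => //; rewrite su ut.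
move: ft; rewrite /= !in_itv /= andbT => ft.
by rewrite andbT (lt_le_trans ft) // fni.
Qed.


Lemma Ioo0_interval (Rb : \bar R) : is_interval (Ioo0 Rb).
Proof.
move=> s t [s0 sR] [t0 tR] u /andP[su ut]; split.
  exact: lt_le_trans s0 su.
by apply: le_lt_trans tR; rewrite lee_fin.
Qed.

Lemma Ioo0_meas (Rb : \bar R) : measurable (Ioo0 Rb).
Proof. apply: is_interval_measurable; exact: Ioo0_interval. Qed.

Lemma Ioo0_ex (Rb : \bar R) : (0 < Rb)%E -> exists t, Ioo0 Rb t.
Proof.
case: Rb => [r||] //; rewrite ?lte_fin => r0.
  by exists (r / 2); split; [exact: divr_gt0|rewrite lte_fin ltr_pdivrMr// ltr_pMr// ltr1n].
by exists 1; split; [exact: ltr01|exact: ltry].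
Qed.

Lemma Ioo0_next (Rb : \bar R) t : Ioo0 Rb t ->
  exists t', [/\ t < t', t' <= 2 * t & Ioo0 Rb t'].
Proof.
case=> t0; case: Rb => [r||] //; rewrite ?lte_fin => tr.
  exists (Num.min (2 * t) ((t + r) / 2)); split.
  - rewrite lt_min; apply/andP; split; first by rewrite mulr_natl mulr2n ltrDr.
    by rewrite ltr_pdivlMr// mulrDr mulr1 ltrD2l.
  - by rewrite ge_min lexx.
  split; first by rewrite lt_min; apply/andP; split;
      [rewrite mulr_gt0|rewrite divr_gt0// addr_gt0// (lt_trans t0)].
  rewrite lte_fin gt_min; apply/orP; right.
  by rewrite ltr_pdivrMr// mulrDr mulr1 ltrD2r.
exists (2 * t); split => //; first by rewrite mulr_natl mulr2n ltrDr.
by split; [rewrite mulr_gt0|exact: ltry].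
Qed.

End Aux.

Section Phi.
Variables (R : realType) (Rb : \bar R) (phi : R -> R).
Hypothesis qc : quasiconcave Rb phi.

Lemma phi_gt0 t : Ioo0 Rb t -> 0 < phi t.
Proof.
case: qc => p0 pz _ _ [t0 tR]; rewrite lt_def p0 ?ltW// andbT.
by apply/eqP => /(pz _ (ltW t0) tR) tz; move: t0; rewrite tz ltxx.
Qed.

Lemma phi_le s t : 0 <= s -> s <= t -> Ioo0 Rb t -> phi s <= phi t.
Proof. by case: qc => _ _ nd _ s0 st [_ tR]; exact: nd. Qed.

Lemma phi_q s t : 0 < s -> s <= t -> Ioo0 Rb t -> phi t <= t / s * phi s.
Proof.
case: qc => _ _ _ q s0 st [t0 tR].
have := q s t s0 st tR; rewrite ler_pdivrMr// => h.
by rewrite mulrC mulrA; move: h; rewrite mulrAC.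
Qed.

Lemma phiV_anti : forall x y, Ioo0 Rb x -> Ioo0 Rb y -> x <= y ->
  (((phi y)^-1)%:E <= ((phi x)^-1)%:E)%E.
Proof.
move=> x y Dx Dy xy; rewrite lee_fin lef_pV2 ?posrE ?phi_gt0//.
by apply: phi_le => //; case: Dx => /ltW.
Qed.

End Phi.

Section Rearr.
Variables (R : realType) (Rb : \bar R).
Local Open Scope ereal_scope.

Lemma lebIoo (a b : R) : (a <= b)%R ->
  (@lebesgue_measure R : measure _ R) `]a, b[%classic = (b - a)%:E.
Proof.
move=> ab; have := @lebesgue_measure_itv R `]a, b[; rewrite /=.
case: ltP => [_ -> //|]; rewrite lee_fin => ba.
have -> : a = b by apply/eqP; rewrite eq_le ab ba.
by rewrite subrr => ->.
Qed.

Lemma rearr_ge0 f t : 0 <= rearr Rb f t.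
Proof.
by apply/ereal_infP => _ [lam [lam0 _] <-]; rewrite lee_fin ltW.
Qed.

Lemma rearr_le f t (lam : R) : (0 < lam)%R -> distrib Rb f lam <= t%:E ->
  rearr Rb f t <= lam%:E.
Proof. by move=> l0 dl; apply: ereal_inf_lbound; exists lam. Qed.

Lemma rearr_geP f t (L : \bar R) :
  (forall lam : R, (0 < lam)%R -> distrib Rb f lam <= t%:E -> L <= lam%:E) ->
  L <= rearr Rb f t.
Proof. by move=> h; apply/ereal_infP => _ [lam [l0 dl] <-]; exact: h. Qed.

Lemma rearr_anti f s t : (s <= t)%R -> rearr Rb f t <= rearr Rb f s.
Proof.
move=> st; apply: ereal_inf_le_tmp => _ [lam [l0 dl] <-]; exists lam => //.
by split => //; apply: le_trans dl _; rewrite lee_fin.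
Qed.

Lemma rearr_meas f (D : set R) : is_interval D -> measurable_fun D (rearr Rb f).
Proof. by move=> iD; apply: eanti_measurable => // x y _ _; exact: rearr_anti. Qed.

Lemma rearr2_ge0 f t : (0 < t)%R -> 0 <= rearr2 Rb f t.
Proof.
move=> t0; rewrite /rearr2; apply: mule_ge0; first by rewrite lee_fin invr_ge0 ltW.
by apply: integral_ge0 => x _; exact: rearr_ge0.
Qed.

Lemma rearr_le_rearr2 f t : (0 < t)%R -> rearr Rb f t <= rearr2 Rb f t.
Proof.
move=> t0; rewrite /rearr2.
have mI : measurable (`]0%R, t[ : set R) by [].
have : \int[lebesgue_measure]_(s in `]0%R, t[) cst (rearr Rb f t) s <=
       \int[lebesgue_measure]_(s in `]0%R, t[) rearr Rb f s.
  apply: ge0_le_integral => //.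
  - by move=> x _; exact: rearr_ge0.
  - by apply: rearr_meas; exact: interval_is_interval.
  - move=> x; rewrite /= in_itv /= => /andP[_ xt]; apply: rearr_anti.
    exact: ltW.
rewrite integral_cst// (lebIoo (ltW t0)) subr0 => h.
apply: le_trans (lee_wpmul2l _ h); last by rewrite lee_fin invr_ge0 ltW.
by rewrite muleCA -EFinM mulVf ?gt_eqF// mule1.
Qed.

End Rearr.

Section Main.
Variables (R : realType) (Rb : \bar R) (phi : R -> R).
Hypothesis Rb0 : (0 < Rb)%E.
Hypothesis qc : quasiconcave Rb phi.
Local Open Scope ereal_scope.

Lemma phi_ge0' t : Ioo0 Rb t -> (0 <= phi t)%R.
Proof. by move=> /(phi_gt0 qc)/ltW. Qed.

Lemma M_norm_ge0 f : 0 <= M_norm Rb phi f.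
Proof.
have [t Dt] := Ioo0_ex Rb0.
apply: le_ereal_sup_tmp; exists ((phi t)%:E * rearr2 Rb f t); first by exists t.
apply: mule_ge0; first by rewrite lee_fin phi_ge0'.
by apply: rearr2_ge0; case: Dt.
Qed.

Lemma phi_rearr_le_M f s : Ioo0 Rb s -> (phi s)%:E * rearr Rb f s <= M_norm Rb phi f.
Proof.
move=> Ds; apply: (@le_trans _ _ ((phi s)%:E * rearr2 Rb f s)).
  apply: lee_wpmul2l; first by rewrite lee_fin phi_ge0'.
  by apply: rearr_le_rearr2; case: Ds.
by apply: ereal_sup_ubound; exists s.
Qed.

Lemma Ioo0_sub s t : (0 < s)%R -> (s <= t)%R -> Ioo0 Rb t -> Ioo0 Rb s.
Proof.
move=> s0 st [t0 tR]; split => //; apply: le_lt_trans tR; by rewrite lee_fin.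
Qed.

Lemma S_ge0 f t : Ioo0 Rb t -> 0 <= S_op Rb phi f t.
Proof.
move=> Dt; have [t0 _] := Dt; rewrite /S_op; apply: mule_ge0.
  by rewrite lee_fin invr_ge0 phi_ge0'.
apply: le_ereal_sup_tmp; exists ((phi (t / 2)%R)%:E * rearr Rb f (t / 2)%R).
  exists (t / 2)%R => //; rewrite /= in_itv /= divr_gt0 //=.
  by rewrite ltr_pdivrMr// ltr_pMr// ltr1n.
apply: mule_ge0; last exact: rearr_ge0.
rewrite lee_fin phi_ge0'//; apply: (Ioo0_sub _ _ Dt); first exact: divr_gt0.
by rewrite ler_pdivrMr// ler_pMr// ler1n.
Qed.

Lemma S_meas f : measurable_fun (Ioo0 Rb) (S_op Rb phi f).
Proof.
rewrite /S_op.
apply: (@emeasurable_funM _ _ _ _ (fun t => ((phi t)^-1)%:E)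
  (fun t => ereal_sup [set ((phi s)%:E * rearr Rb f s) | s in (`]0%R, t[ : set R)])).
  by apply: eanti_measurable; [exact: Ioo0_interval|exact: phiV_anti].
apply: emono_measurable; first exact: Ioo0_interval.
move=> x y _ _ xy; apply: ereal_sup_le => _ [s + <-]; rewrite /= !in_itv /= => /andP[s0 sx].
by exists s => //; rewrite /= in_itv /= s0 (lt_le_trans sx).
Qed.

Lemma S_le f t : Ioo0 Rb t ->
  S_op Rb phi f t <= ((phi t)^-1)%:E * M_norm Rb phi f.
Proof.
move=> Dt; rewrite /S_op; apply: lee_wpmul2l.
  by rewrite lee_fin invr_ge0 phi_ge0'.
apply: ge_ereal_sup => _ [s + <-]; rewrite /= in_itv /= => /andP[s0 st].
apply: phi_rearr_le_M; exact: (Ioo0_sub s0 (ltW st) Dt).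
Qed.


Lemma S_abs_meas f : measurable (Ioo0 Rb) ->
  forall lam : R, measurable (Ioo0 Rb `&` [set x | lam%:E < `|S_op Rb phi f x|]).
Proof.
move=> mD lam.
have m : measurable_fun (Ioo0 Rb) (abse \o S_op Rb phi f).
  apply: measurableT_comp; first exact: abse_measurable.
  exact: S_meas.
exact: (emeasurable_fun_o_infty mD m).
Qed.

Lemma rearr_S_le f N t : M_norm Rb phi f = N%:E -> Ioo0 Rb t ->
  rearr Rb (S_op Rb phi f) t <= (N / phi t)%:E.
Proof.
move=> MN Dt; have [t0 tR] := Dt.
have N0 : (0 <= N)%R by rewrite -lee_fin -MN M_norm_ge0.
have pt0 := phi_gt0 qc Dt.
apply/lee_addgt0Pr => e e0; rewrite -EFinD; apply: rearr_le.
  by rewrite ltr_wpDl // divr_ge0 // ltW.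
rewrite /distrib.
apply: (@le_trans _ _ (@lebesgue_measure R `]0%R, t[)); last first.
  have := lebIoo (ltW t0); rewrite subr0 => E.
  by rewrite le_eqVlt; apply/orP; left; apply/eqP; exact: E.
apply: le_measure; rewrite ?inE //.
- by apply: S_abs_meas; exact: Ioo0_meas.
move=> x [Dx]; rewrite /= in_itv /= => hx; have [x0 _] := Dx; rewrite x0 /=.
rewrite ltNge; apply/negP => tx.
move: hx; rewrite gee0_abs ?S_ge0 //; apply/negP; rewrite -leNgt.
apply: (le_trans (S_le f Dx)); rewrite MN -EFinM lee_fin.
apply: (@le_trans _ _ (N / phi t)%R); last by rewrite lerDl ltW.
rewrite mulrC ler_wpM2l // lef_pV2 ?posrE ?phi_gt0 //.
by apply: (phi_le qc) => //; exact: ltW.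
exact: (phi_gt0 qc Dx).
Qed.


Lemma itv_mem (t x : R) : (`]0%R, t[%classic : set R) x -> (0 < x < t)%R.
Proof. by rewrite /= in_itv. Qed.

Lemma phiV_meas t : Ioo0 Rb t ->
  measurable_fun (`]0%R, t[ : set R) (fun s => ((phi s)^-1)%:E).
Proof.
move=> Dt; apply: eanti_measurable; first exact: interval_is_interval.
move=> x y; rewrite /= !in_itv /= => /andP[x0 xt] /andP[y0 yt] xy.
apply: (phiV_anti qc) => //.
  exact: (Ioo0_sub x0 (ltW xt) Dt).
exact: (Ioo0_sub y0 (ltW yt) Dt).
Qed.

Lemma rearr2_S_le f N C t : M_norm Rb phi f = N%:E -> Ioo0 Rb t ->
  (t^-1)%:E * \int[@lebesgue_measure R]_(s in (`]0%R, t[ : set R)) ((phi s)^-1)%:E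
        <= (C / phi t)%:E ->
  rearr2 Rb (S_op Rb phi f) t <= (N * (C / phi t))%:E.
Proof.
move=> MN Dt hB; have [t0 tR] := Dt.
have N0 : (0 <= N)%R by rewrite -lee_fin -MN M_norm_ge0.
have mI : measurable (`]0%R, t[ : set R) by [].
have le1 : \int[@lebesgue_measure R]_(s in (`]0%R, t[ : set R)) rearr Rb (S_op Rb phi f) s
   <= \int[@lebesgue_measure R]_(s in (`]0%R, t[ : set R)) (N%:E * ((phi s)^-1)%:E).
  apply: ge0_le_integral => //.
  - by move=> x _; exact: rearr_ge0.
  - by apply: rearr_meas; exact: interval_is_interval.
  - apply: emeasurable_funM; first exact: measurable_cst.
    exact: phiV_meas.
  - move=> x; rewrite /= in_itv /= => /andP[x0 xt].
    by rewrite -EFinM; apply: rearr_S_le => //; exact: (Ioo0_sub x0 (ltW xt) Dt).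
rewrite ge0_integralZl_EFin // in le1; first last.
  - exact: phiV_meas.
  - move=> x /itv_mem /andP[x0 xt].
    by rewrite lee_fin invr_ge0 phi_ge0' //; exact: (Ioo0_sub x0 (ltW xt) Dt).
rewrite /rearr2; apply: le_trans (lee_wpmul2l _ le1) _.
  by rewrite lee_fin invr_ge0 ltW.
rewrite muleCA EFinM; apply: lee_wpmul2l => //; by rewrite lee_fin.
Qed.


Lemma B_bounded : B_condition Rb phi ->
  bounded_op (in_M Rb phi) (M_norm Rb phi) (S_op Rb phi).
Proof.
case=> C [C0 hB]; exists C => f [mf aef Mf].
have N0 := M_norm_ge0 f.
have MN : M_norm Rb phi f = (fine (M_norm Rb phi f))%:E.
  by rewrite fineK // ge0_fin_numE.
set N := fine (M_norm Rb phi f) in MN.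
have Mle : M_norm Rb phi (S_op Rb phi f) <= (C * N)%:E.
  apply: ge_ereal_sup => _ [t Dt <-].
  have pt := phi_gt0 qc Dt.
  apply: le_trans (lee_wpmul2l _ (rearr2_S_le MN Dt (hB t Dt))) _.
    by rewrite lee_fin ltW.
  rewrite -EFinM lee_fin le_eqVlt; apply/orP; left; apply/eqP.
  by field; rewrite gt_eqF.
split; last by rewrite MN -EFinM.
split.
- exact: S_meas.
- apply: aeW => x Dx; rewrite ge0_fin_numE ?S_ge0 //.
  by apply: le_lt_trans (S_le f Dx) _; rewrite MN -EFinM ltry.
- by apply: le_lt_trans Mle _; exact: ltry.
Qed.

Lemma leb_pos : (0 < (@lebesgue_measure R) setT)%E.
Proof.
apply: (@lt_le_trans _ _ (@lebesgue_measure R `]0%R, 1%R[)).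
  have := lebIoo (@ler01 R); rewrite subr0 => ->; exact: lte01.
by apply: le_measure; rewrite ?inE.
Qed.

Lemma Linf_ge0 g : 0 <= Linf_norm Rb g.
Proof.
apply: ess_sup_gee; first exact: leb_pos.
by apply: aeW => x; case: ifP => _ //; exact: abse_ge0.
Qed.

Lemma distrib0 f (lam : R) : measurable_fun (Ioo0 Rb) f ->
  Linf_norm Rb f < lam%:E -> distrib Rb f lam = 0.
Proof.
move=> mf hl.
have := ess_sup_ge (@lebesgue_measure R) (fun x => if x \in Ioo0 Rb then `|f x| else 0).
case=> A [mA A0 sub].
rewrite /distrib; apply/eqP; rewrite eq_le measure_ge0 andbT -A0.
apply: le_measure; rewrite ?inE //.
  have m : measurable_fun (Ioo0 Rb) (abse \o f).
    by apply: measurableT_comp; [exact: abse_measurable|exact: mf].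
  exact: (emeasurable_fun_o_infty (Ioo0_meas Rb) m).
move=> x [Dx hx]; apply: sub => /=; rewrite (mem_set Dx) => hle.
by move: (lt_le_trans hx hle); rewrite ltNge (ltW hl).
Qed.

Lemma rearr_Linf f s : measurable_fun (Ioo0 Rb) f -> Linf_norm Rb f < +oo ->
  (0 <= s)%R -> rearr Rb f s <= Linf_norm Rb f.
Proof.
move=> mf Lf s0.
have L0 := Linf_ge0 f.
have MN : Linf_norm Rb f = (fine (Linf_norm Rb f))%:E by rewrite fineK // ge0_fin_numE.
set L := fine (Linf_norm Rb f) in MN; rewrite MN.
have L0' : (0 <= L)%R by rewrite -lee_fin -MN.
apply/lee_addgt0Pr => e e0; rewrite -EFinD; apply: rearr_le.
  by rewrite ltr_wpDl.
rewrite distrib0 // ?lee_fin // MN lte_fin ltrDl //.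
Qed.

Lemma S_Linf f t : measurable_fun (Ioo0 Rb) f -> Linf_norm Rb f < +oo ->
  Ioo0 Rb t -> S_op Rb phi f t <= Linf_norm Rb f.
Proof.
move=> mf Lf Dt.
have L0 := Linf_ge0 f.
have MN : Linf_norm Rb f = (fine (Linf_norm Rb f))%:E by rewrite fineK // ge0_fin_numE.
set L := fine (Linf_norm Rb f) in MN.
have pt := phi_gt0 qc Dt.
rewrite /S_op; apply: (@le_trans _ _ (((phi t)^-1)%:E * ((phi t)%:E * Linf_norm Rb f))).
  apply: lee_wpmul2l; first by rewrite lee_fin invr_ge0 ltW.
  apply: ge_ereal_sup => _ [s /itv_mem /andP[s0 st] <-].
  have Ds := Ioo0_sub s0 (ltW st) Dt.
  apply: le_trans (lee_wpmul2l _ (rearr_Linf mf Lf (ltW s0))) _.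
    by rewrite lee_fin phi_ge0'.
  apply: lee_wpmul2r => //; rewrite lee_fin.
  by apply: (phi_le qc) => //; exact: ltW.
by rewrite MN muleA -!EFinM mulVf ?gt_eqF // mul1r.
Qed.

Lemma Linf_bounded : bounded_op (in_Linf Rb) (Linf_norm Rb) (S_op Rb phi).
Proof.
exists 1%R => f [mf Lf].
have L0 := Linf_ge0 f.
have le1 : Linf_norm Rb (S_op Rb phi f) <= Linf_norm Rb f.
  apply/ess_supP; apply: aeW => x; case: ifP => [/set_mem Dx|_] //.
  by rewrite gee0_abs ?S_ge0 //; exact: S_Linf.
split; last by rewrite mul1e.
by split; [exact: S_meas|exact: le_lt_trans le1 Lf].
Qed.

End Main.

Definition fa (R : realType) (a : R) : R -> \bar R :=
  fun x => (\1_(`]0%R, a[%classic : set R) x)%:E.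

Section FA.
Variables (R : realType) (Rb : \bar R) (phi : R -> R).
Hypothesis Rb0 : (0 < Rb)%E.
Hypothesis qc : quasiconcave Rb phi.
Local Open Scope ereal_scope.

Lemma fa_E (a x : R) : fa a x = (if (0 < x < a)%R then 1%R else 0%R)%:E.
Proof.
rewrite /fa indicE; congr (_%:E); case: ifPn => h.
  by rewrite mem_set //= in_itv /= h.
by rewrite memNset //= in_itv /= (negbTE h).
Qed.

Lemma distrib_meas f (lam : R) : measurable_fun (Ioo0 Rb) f ->
  measurable (Ioo0 Rb `&` [set x | lam%:E < `|f x|]).
Proof.
move=> mf; have m : measurable_fun (Ioo0 Rb) (abse \o f).
  by apply: measurableT_comp; [exact: abse_measurable|exact: mf].
exact: (emeasurable_fun_o_infty (Ioo0_meas Rb) m).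
Qed.

Lemma fa_meas a : measurable_fun (Ioo0 Rb) (fa a).
Proof. by apply/measurable_EFinP; exact: measurable_indic. Qed.

Lemma distrib_fa_le (a lam : R) : (0 <= a)%R -> (0 <= lam)%R ->
  distrib Rb (fa a) lam <= a%:E.
Proof.
move=> a0 l0; rewrite /distrib.
apply: (@le_trans _ _ (@lebesgue_measure R `]0%R, a[)); last first.
  have := lebIoo a0; rewrite subr0 => E.
  by rewrite le_eqVlt; apply/orP; left; apply/eqP; exact: E.
apply: le_measure; rewrite ?inE //; first by apply: distrib_meas; exact: fa_meas.
move=> x [_ hx]; have : lam%:E < `|fa a x| by [].
rewrite fa_E; case: ifPn => [h _|_]; first by rewrite /= in_itv.
by rewrite abse0 lte_fin ltNge l0.
Qed.

Lemma distrib_fa_1 (a lam : R) : (1 <= lam)%R -> distrib Rb (fa a) lam = 0.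
Proof.
move=> l1; rewrite /distrib; apply/eqP; rewrite eq_le measure_ge0 andbT.
rewrite -(measure0 (@lebesgue_measure R)).
apply: le_measure; rewrite ?inE //; first by apply: distrib_meas; exact: fa_meas.
move=> x [_ hx]; have : lam%:E < `|fa a x| by [].
rewrite fa_E; case: ifPn => _.
  by rewrite gee0_abs ?lee_fin // lte_fin ltNge l1.
by rewrite abse0 lte_fin ltNge (le_trans ler01 l1).
Qed.


Lemma rearr_fa_le (a x : R) : (0 < a)%R -> (0 < x)%R ->
  rearr Rb (fa a) x <= (\1_(`]0%R, a[%classic : set R) x)%:E.
Proof.
move=> a0 x0; rewrite -/(fa a x) fa_E x0 /=; case: ltP => xa.
  apply: rearr_le => //; rewrite distrib_fa_1 // lee_fin ltW //.
apply/lee_addgt0Pr => e e0; rewrite add0e; apply: rearr_le => //.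
by apply: le_trans (distrib_fa_le (ltW a0) (ltW e0)) _; rewrite lee_fin.
Qed.

Lemma M_fa (a : R) : Ioo0 Rb a -> M_norm Rb phi (fa a) <= (phi a)%:E.
Proof.
move=> Da; have [a0 aR] := Da.
apply: ge_ereal_sup => _ [s Ds <-]; have [s0 sR] := Ds.
have mI : measurable (`]0%R, s[ : set R) by [].
have mA : measurable (`]0%R, a[ : set R) by [].
have le1 : \int[@lebesgue_measure R]_(x in (`]0%R, s[ : set R)) rearr Rb (fa a) x
   <= \int[@lebesgue_measure R]_(x in (`]0%R, s[ : set R))
        (\1_(`]0%R, a[%classic : set R) x)%:E.
  apply: ge0_le_integral => //.
  - by move=> x _; exact: rearr_ge0.
  - by apply: rearr_meas; exact: interval_is_interval.
  - by apply/measurable_EFinP; exact: measurable_indic.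
  - by move=> x /itv_mem /andP[x0 _]; exact: rearr_fa_le.
rewrite integral_indic // in le1.
move: le1; set m := (X in _ <= X) => le1.
have m0 : 0 <= m by exact: measure_ge0.
have ma : m <= a%:E.
  have := lebIoo (ltW a0); rewrite subr0 => <-.
  by apply: le_measure; rewrite ?inE //; exact: measurableI.
have ms : m <= s%:E.
  have := lebIoo (ltW s0); rewrite subr0 => <-.
  by apply: le_measure; rewrite ?inE //; exact: measurableI.
have mE : m = (fine m)%:E by rewrite fineK // ge0_fin_numE // (le_lt_trans ma) // ltry.
rewrite mE in le1 ma ms m0; rewrite lee_fin in ma ms m0.
have ps := phi_gt0 qc Ds.
apply: (@le_trans _ _ ((phi s)%:E * ((s^-1)%:E * (fine m)%:E))).
  apply: lee_wpmul2l; first by rewrite lee_fin ltW.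
  apply: lee_wpmul2l => //; by rewrite lee_fin invr_ge0 ltW.
rewrite -!EFinM lee_fin.
have [sa|aS] := leP s a.
  apply: (@le_trans _ _ (phi s)); last exact: (phi_le qc (ltW s0) sa Da).
  rewrite -[leRHS]mulr1 ler_wpM2l ?(ltW ps) //.
  by rewrite ler_pdivrMl // mulr1.
have := phi_q qc a0 (ltW aS) Ds.
rewrite -ler_pdivrMl ?divr_gt0 // invf_div => h.
apply: (@le_trans _ _ (phi s * (s^-1 * a))%R).
  by rewrite ler_wpM2l ?(ltW ps) // ler_wpM2l // invr_ge0 ltW.
by apply: le_trans h; rewrite le_eqVlt; apply/orP; left; apply/eqP; ring.
Qed.


Lemma fa_inM a : Ioo0 Rb a -> in_M Rb phi (fa a).
Proof.
move=> Da; split; first exact: fa_meas.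
  by apply: aeW => x _; rewrite fa_E.
by apply: le_lt_trans (M_fa Da) _; exact: ltry.
Qed.

Lemma rearr_fa_ge1 (a s : R) : Ioo0 Rb a -> (0 <= s)%R -> (s < a)%R ->
  1 <= rearr Rb (fa a) s.
Proof.
move=> Da s0 sa; have [a0 aR] := Da.
apply: rearr_geP => lam l0 dl; rewrite leNgt; apply/negP; rewrite lte_fin => l1.
have : a%:E <= distrib Rb (fa a) lam.
  have := lebIoo (ltW a0); rewrite subr0 => <-.
  apply: le_measure; rewrite ?inE //; first by apply: distrib_meas; exact: fa_meas.
  move=> x /itv_mem /andP[x0 xa]; split; first exact: (Ioo0_sub x0 (ltW xa) Da).
  change (lam%:E < `|fa a x|); rewrite fa_E x0 xa /=.
  by rewrite normr1 lte_fin.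
move=> h; have := le_trans h dl; rewrite lee_fin leNgt sa //.
Qed.

Lemma phi_half x : Ioo0 Rb x -> (phi x <= 2 * phi (x / 2))%R.
Proof.
move=> Dx; have [x0 _] := Dx.
have := phi_q qc (divr_gt0 x0 (@ltr0n R 2)) _ Dx.
rewrite ler_pdivrMr // ler_pMr // ler1n => /(_ isT).
have -> // : (x / (x / 2) = 2 :> R)%R.
by rewrite invf_div mulrCA divff ?gt_eqF // mulr1.
Qed.

Lemma phi_double s y : Ioo0 Rb y -> (0 < s)%R -> (s <= y)%R -> (y <= 2 * s)%R ->
  (phi y <= 2 * phi s)%R.
Proof.
move=> Dy s0 sy y2; apply: le_trans (phi_q qc s0 sy Dy) _.
rewrite ler_wpM2r //; first by rewrite ltW // (phi_gt0 qc (Ioo0_sub s0 sy Dy)).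
by rewrite ler_pdivrMr.
Qed.


Lemma cross (A B C D : R) : (0 < B)%R -> (0 < D)%R -> (A * D <= C * B)%R ->
  (A / B <= C / D)%R.
Proof. by move=> B0 D0 h; rewrite ler_pdivrMr // mulrAC ler_pdivlMr. Qed.

Lemma S_fa_ge a x s : Ioo0 Rb a -> Ioo0 Rb x -> (0 < s)%R -> (s < x)%R ->
  (s < a)%R -> (phi s / phi x)%:E <= S_op Rb phi (fa a) x.
Proof.
move=> Da Dx s0 sx sa.
have Ds := Ioo0_sub s0 (ltW sx) Dx.
have ps := phi_gt0 qc Ds; have px := phi_gt0 qc Dx.
rewrite /S_op mulrC EFinM; apply: lee_wpmul2l; first by rewrite lee_fin invr_ge0 ltW.
apply: le_ereal_sup_tmp; exists ((phi s)%:E * rearr Rb (fa a) s).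
  by exists s => //; rewrite /= in_itv /= s0 sx.
rewrite -[X in X <= _]mule1; apply: lee_wpmul2l; first by rewrite lee_fin ltW.
exact: (rearr_fa_ge1 Da (ltW s0) sa).
Qed.

Lemma Sfa_lb a s y x : Ioo0 Rb a -> Ioo0 Rb s -> (a <= s)%R -> Ioo0 Rb y ->
  (s <= y)%R -> (y <= 2 * s)%R -> (0 < x)%R -> (x < y)%R ->
  (phi a / (4 * phi s))%:E <= S_op Rb phi (fa a) x.
Proof.
move=> Da Ds a_s Dy sy y2 x0 xy.
have [a0 _] := Da; have [s0 _] := Ds.
have Dx := Ioo0_sub x0 (ltW xy) Dy.
have pa := phi_gt0 qc Da; have ps := phi_gt0 qc Ds; have px := phi_gt0 qc Dx.
have pas : (phi a <= phi s)%R := phi_le qc (ltW a0) a_s Ds.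
have [xa|ax] := leP x a.
  have x2 : (0 < x / 2)%R by rewrite divr_gt0.
  have x2x : (x / 2 < x)%R by rewrite ltr_pdivrMr // ltr_pMr // ltr1n.
  have Dx2 := Ioo0_sub x2 (ltW x2x) Dx.
  have px2 := phi_gt0 qc Dx2.
  apply: le_trans (S_fa_ge Da Dx x2 x2x (lt_le_trans x2x xa)); rewrite lee_fin.
  apply: cross; rewrite ?mulr_gt0 //.
  have h := phi_half Dx.
  apply: le_trans (ler_pM (ltW pa) (ltW px) pas h) _.
  have -> : (phi (x / 2) * (4 * phi s) = 2 * (phi s * (2 * phi (x / 2))))%R by ring.
  by apply: ler_peMl; rewrite ?mulr_ge0 ?ltW // ltr1n.
have a2 : (0 < a / 2)%R by rewrite divr_gt0.
have a2a : (a / 2 < a)%R by rewrite ltr_pdivrMr // ltr_pMr // ltr1n.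
have Da2 := Ioo0_sub a2 (ltW a2a) Da.
have pa2 := phi_gt0 qc Da2.
apply: le_trans (S_fa_ge Da Dx a2 (lt_trans a2a ax) a2a); rewrite lee_fin.
apply: cross; rewrite ?mulr_gt0 //.
have h1 := phi_half Da.
have h2 : (phi x <= 2 * phi s)%R.
  apply: le_trans (phi_double Dy s0 sy y2).
  exact: (phi_le qc (ltW x0) (ltW xy) Dy).
have -> : (phi (a / 2) * (4 * phi s) = (2 * phi (a / 2)) * (2 * phi s))%R by ring.
by apply: ler_pM => //; apply: ltW.
Qed.

Lemma rearr_Sfa_ge a s : Ioo0 Rb a -> Ioo0 Rb s -> (a <= s)%R ->
  (phi a / (4 * phi s))%:E <= rearr Rb (S_op Rb phi (fa a)) s.
Proof.
move=> Da Ds a_s; have [s0 _] := Ds.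
have [y [sy y2 Dy]] := Ioo0_next Ds.
have [y0 _] := Dy.
apply: rearr_geP => lam l0 dl; rewrite leNgt; apply/negP => hl.
have : y%:E <= distrib Rb (S_op Rb phi (fa a)) lam.
  have := lebIoo (ltW y0); rewrite subr0 => <-.
  apply: le_measure; rewrite ?inE //; first by apply: distrib_meas; exact: S_meas.
  move=> x /itv_mem /andP[x0 xy]; split; first exact: (Ioo0_sub x0 (ltW xy) Dy).
  change (lam%:E < `|S_op Rb phi (fa a) x|).
  rewrite gee0_abs; last exact: (S_ge0 qc _ (Ioo0_sub x0 (ltW xy) Dy)).
  exact: lt_le_trans hl (Sfa_lb Da Ds a_s Dy (ltW sy) y2 x0 xy).
move=> h; have := le_trans h dl; rewrite lee_fin leNgt sy //.
Qed.


Definition hh (a : R) (s : R) : \bar R :=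
  (\1_(`[a, +oo[%classic : set R) s * (phi s)^-1)%:E.

Lemma hh_E a s : hh a s = (if (a <= s)%R then (phi s)^-1 else 0%R)%:E.
Proof.
rewrite /hh indicE; congr (_%:E); case: ifPn => h.
  by rewrite mem_set /= ?in_itv /= ?h // mul1r.
by rewrite memNset ?mul0r //= in_itv /= andbT; apply/negP.
Qed.

Lemma hh_meas a t : Ioo0 Rb t -> measurable_fun (`]0%R, t[ : set R) (hh a).
Proof.
move=> Dt; rewrite /hh.
apply: (proj2 (measurable_EFinP _
  (fun s => \1_(`[a, +oo[%classic : set R) s * (phi s)^-1)%R)).
apply: (@measurable_funM _ _ _ _ (\1_(`[a, +oo[%classic : set R)) (fun s => (phi s)^-1)%R).
  exact: measurable_indic.
exact: (proj1 (measurable_EFinP _ (fun s => (phi s)^-1)%R) (phiV_meas qc Dt)).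
Qed.

Lemma hh_ge0 (a t x : R) : Ioo0 Rb t -> (`]0%R, t[%classic : set R) x -> 0 <= hh a x.
Proof.
move=> Dt /itv_mem /andP[x0 xt]; rewrite hh_E; case: ifPn => // _.
by rewrite lee_fin invr_ge0 ltW // (phi_gt0 qc (Ioo0_sub x0 (ltW xt) Dt)).
Qed.


Lemma key1 (C0 a t : R) :
  (forall f, in_M Rb phi f -> in_M Rb phi (S_op Rb phi f) /\
     M_norm Rb phi (S_op Rb phi f) <= C0%:E * M_norm Rb phi f) ->
  Ioo0 Rb t -> (0 < a)%R -> (a < t)%R ->
  \int[@lebesgue_measure R]_(s in (`]0%R, t[ : set R)) hh a s
    <= (4 * `|C0| * t / phi t)%:E.
Proof.
move=> hC Dt a0 at_; have [t0 tR] := Dt.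
have Da := Ioo0_sub a0 (ltW at_) Dt.
have pa := phi_gt0 qc Da; have pt := phi_gt0 qc Dt.
have [_ MS] := hC (fa a) (fa_inM Da).
have Mfa0 := M_norm_ge0 Rb0 qc (fa a).
have M1 : M_norm Rb phi (S_op Rb phi (fa a)) <= (`|C0| * phi a)%:E.
  apply: le_trans MS _; rewrite EFinM.
  apply: le_trans (lee_wpmul2r _ _) (lee_wpmul2l _ (M_fa Da)) => //.
  by rewrite lee_fin ler_norm.
have M2 : (phi t)%:E * rearr2 Rb (S_op Rb phi (fa a)) t
    <= M_norm Rb phi (S_op Rb phi (fa a)).
  by apply: ereal_sup_ubound; exists t.
have mI : measurable (`]0%R, t[ : set R) by [].
have I1 : (phi a / 4)%:E * \int[@lebesgue_measure R]_(s in (`]0%R, t[ : set R)) hh a s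
    <= \int[@lebesgue_measure R]_(s in (`]0%R, t[ : set R)) rearr Rb (S_op Rb phi (fa a)) s.
  rewrite -ge0_integralZl_EFin //; last 3 first.
  - by move=> x; exact: hh_ge0.
  - exact: hh_meas.
  - by rewrite divr_ge0 // ltW.
  apply: ge0_le_integral => //.
  - move=> x xI; apply: mule_ge0; last exact: hh_ge0 Dt xI.
    by rewrite lee_fin divr_ge0 // ltW.
  - by apply: emeasurable_funM; [exact: measurable_cst|exact: hh_meas].
  - by apply: rearr_meas; exact: interval_is_interval.
  - move=> x /itv_mem /andP[x0 xt]; rewrite hh_E; case: ifPn => ax.
      have Dx := Ioo0_sub x0 (ltW xt) Dt.
      apply: le_trans (rearr_Sfa_ge Da Dx ax); rewrite -EFinM lee_fin.
      rewrite le_eqVlt; apply/orP; left; apply/eqP; field.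
      by rewrite gt_eqF // (phi_gt0 qc Dx).
    by rewrite mule0; exact: rearr_ge0.
set I := \int[@lebesgue_measure R]_(s in (`]0%R, t[ : set R)) hh a s.
set r := (phi t / t * (phi a / 4))%R.
have r0 : (0 < r)%R by rewrite /r !mulr_gt0 ?invr_gt0.
have -> : (4 * `|C0| * t / phi t = r^-1 * (`|C0| * phi a))%R.
  by rewrite /r; field; rewrite !gt_eqF.
rewrite EFinM lee_pdivlMl //.
apply: le_trans M1; apply: le_trans M2; rewrite /rearr2.
apply: le_trans (lee_wpmul2l _ (lee_wpmul2l _ I1)); last 2 first.
- by rewrite lee_fin ltW.
- by rewrite lee_fin invr_ge0 ltW.
by rewrite /r !EFinM !muleA.
Qed.


Lemma key2 (C0 t : R) :
  (forall f, in_M Rb phi f -> in_M Rb phi (S_op Rb phi f) /\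
     M_norm Rb phi (S_op Rb phi f) <= C0%:E * M_norm Rb phi f) ->
  Ioo0 Rb t ->
  \int[@lebesgue_measure R]_(s in (`]0%R, t[ : set R)) ((phi s)^-1)%:E
    <= (4 * `|C0| * t / phi t)%:E.
Proof.
move=> hC Dt; have [t0 tR] := Dt.
pose an (n : nat) := (t / (n.+2)%:R)%R.
have an0 n : (0 < an n)%R by rewrite /an divr_gt0.
have ant n : (an n < t)%R by rewrite /an ltr_pdivrMr // ltr_pMr // ltr1n.
have an_anti n m : (n <= m)%N -> (an m <= an n)%R.
  move=> nm; rewrite /an ler_wpM2l ?(ltW t0) // lef_pV2 ?posrE //.
  by rewrite ler_nat ltnS ltnS.
pose g n := hh (an n).
have mI : measurable (`]0%R, t[ : set R) by [].
have gm n : measurable_fun (`]0%R, t[ : set R) (g n) by exact: hh_meas.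
have g0 n (x : R) : (`]0%R, t[%classic : set R) x -> 0 <= g n x by move=> xI; exact: (hh_ge0 _ Dt xI).
have mono (x : R) : (`]0%R, t[%classic : set R) x -> {homo (fun n => g n x) : n m / (n <= m)%N >-> n <= m}.
  move=> xI n m nm; rewrite /g !hh_E; case: ifPn => h1.
    by rewrite (le_trans (an_anti _ _ nm) h1).
  by case: ifPn => // _; rewrite lee_fin invr_ge0 ltW //;
    case/itv_mem/andP: xI => x0 xt; exact: (phi_gt0 qc (Ioo0_sub x0 (ltW xt) Dt)).
have glim (x : R) : (`]0%R, t[%classic : set R) x -> limn (fun n => g n x) = ((phi x)^-1)%:E.
  case/itv_mem/andP => x0 xt.
  apply: (lim_near_cst (@ereal_hausdorff R)).
  exists (Num.Def.truncn (t / x)) => // n /= Nn.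
  rewrite /g hh_E; case: ifPn => // /negP h; exfalso; apply: h.
  rewrite /an ler_pdivrMr // mulrC -ler_pdivrMr //.
  apply: ltW; apply: lt_le_trans (truncnS_gt _) _.
  by rewrite ler_nat ltnS (leq_trans Nn).
have MC := monotone_convergence (@lebesgue_measure R) mI gm g0 mono.
rewrite (@eq_integral _ _ _ (@lebesgue_measure R) _ (fun x => limn (fun n => g n x))); last first.
  by move=> x; rewrite inE => xI; rewrite glim.
rewrite MC; apply: lime_le.
  apply: ereal_nondecreasing_is_cvgn => n m nm.
  apply: ge0_le_integral => //.
  all: try (by move=> x xI; exact: g0); try exact: gm.
  by move=> x xI; exact: (mono x xI n m nm).
by apply: nearW => n; exact: key1 hC Dt (an0 n) (ant n).
Qed.


Lemma bounded_B : bounded_op (in_M Rb phi) (M_norm Rb phi) (S_op Rb phi) ->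
  B_condition Rb phi.
Proof.
case=> C0 hC; exists (4 * `|C0| + 1)%R; split.
  by rewrite ltr_wpDl // mulr_ge0.
move=> t Dt; have [t0 _] := Dt; have pt := phi_gt0 qc Dt.
apply: le_trans (lee_wpmul2l _ (key2 hC Dt)) _.
  by rewrite lee_fin invr_ge0; exact: ltW.
rewrite -EFinM lee_fin.
have -> : (t^-1 * (4 * `|C0| * t / phi t) = 4 * `|C0| / phi t)%R.
  by field; rewrite !gt_eqF.
apply: ler_wpM2r; first by rewrite invr_ge0; exact: ltW.
by rewrite lerDl.
Qed.

End FA.

Theorem lemma3p2 (R : realType) (Rb : \bar R) (phi : R -> R) :
  (0 < Rb)%E -> quasiconcave Rb phi ->
  (bounded_op (in_M Rb phi) (M_norm Rb phi) (S_op Rb phi) <-> B_condition Rb phi)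
  /\ bounded_op (in_Linf Rb) (Linf_norm Rb) (S_op Rb phi).
Proof.
move=> Rb0 qc; split; last exact: (Linf_bounded qc).
by split; [exact: (bounded_B Rb0 qc)|exact: (B_bounded Rb0 qc)].
Qed.
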